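(* Let $Q$ be a measure on a measurable space $\mathcal{X}$, let $\beta>0$, and let $l,\tilde l:\mathcal{X}\to\mathbb{R}$ be measurable functions such that $0<\int e^{-\beta l}\,dQ<\infty$ and $0<\int e^{-\beta\tilde l}\,dQ<\infty$. Let $P(dx)\propto Q(dx)e^{-\beta l(x)}$ and $\tilde P(dx)\propto Q(dx)e^{-\beta\tilde l(x)}$ be the corresponding Gibbs probability measures. If $\sup_{x}|l(x)-\tilde l(x)|\le\epsilon$, then \[ D_{\mathrm{KL}}(P\|\tilde P)\le2\beta\epsilon\cdot\left\{1\wedge\left(e^{2\beta\epsilon}-1\right)\right\}. \]
   Context: $D_{\mathrm{KL}}$ denotes the Kullback–Leibler divergence (natural logarithm) and $a\wedge b=\min(a,b)$. *)

(* Defs.v *)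
From HB Require Import structures.
From mathcomp Require Import all_boot all_order all_algebra.
From mathcomp Require Import all_classical all_reals all_analysis.
Set Implicit Arguments. Unset Strict Implicit. Unset Printing Implicit Defensive.
Import Order.TTheory GRing.Theory Num.Theory.
Local Open Scope ring_scope.
Local Open Scope ereal_scope.

Definition gibbs_Z (R : realType) (d : measure_display) (T : measurableType d)
  (Q : {measure set T -> \bar R}) (beta : R) (l : T -> R) : \bar R :=
  \int[Q]_x (expR (- beta * l x))%:E.

Definition gibbs_density (R : realType) (d : measure_display) (T : measurableType d)
  (Q : {measure set T -> \bar R}) (beta : R) (l : T -> R) : T -> R :=
  fun x => (expR (- beta * l x) / fine (gibbs_Z Q beta l))%R.

(* KL divergence D_KL(P || P') of P = p dQ and P' = p' dQ, natural log:
   \int p ln(p / p') dQ. *)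
Definition KL_dens (R : realType) (d : measure_display) (T : measurableType d)
  (Q : {measure set T -> \bar R}) (p q : T -> R) : \bar R :=
  \int[Q]_x ((p x * ln (p x / q x))%R)%:E.

(* Main.v *)
Require Import Defs.
From HB Require Import structures.
From mathcomp Require Import all_boot all_order all_algebra.
From mathcomp Require Import all_classical all_reals all_analysis.
From mathcomp Require Import ring lra measurable_realfun.
Import Order.TTheory GRing.Theory Num.Theory.
Local Open Scope ring_scope.
Local Open Scope ereal_scope.

Lemma key_ineq (R : realType) (a t : R) : (0 <= a)%R -> (`|t| <= a)%R ->
  (expR t * t <= a * (expR a - 1) + expR t - 1)%R.
Proof.
move=> a0 ta.
have h1 := expR_ge1Dx t.
suff : ((expR t - 1) * t <= a * (expR a - 1))%R by nra.
have [t0|t0] := leP 0%R t.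
- have ht : (t <= a)%R by move: ta; rewrite ger0_norm.
  have e1 : (expR t <= expR a)%R by rewrite ler_expR.
  nra.
- have ht : (- t <= a)%R by move: ta; rewrite ltr0_norm.
  have e1 : (expR (- a) <= expR t)%R by rewrite ler_expR lerNl.
  have ea : (expR (- a) * expR a = 1)%R by rewrite -expRD addNr expR0.
  have pa := expR_gt0 a. have pna := expR_gt0 (- a).
  have et1 : (expR t <= 1)%R by rewrite -expR0 ler_expR ltW.
  have : (1 - expR (- a) <= expR a - 1)%R by nra.
  nra.
Qed.

Lemma gibbs_meas (R : realType) (d : measure_display) (T : measurableType d)
  (Q : {measure set T -> \bar R}) (beta : R) (l : T -> R) :
  measurable_fun setT l -> measurable_fun setT (fun x => expR (- beta * l x)).
Proof.
move=> ml; apply: measurableT_comp; first exact: measurable_realfun.measurable_expR.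
exact: (measurable_realfun.measurable_funM (measurable_cst _) ml).
Qed.

Lemma gibbs_facts (R : realType) (d : measure_display) (T : measurableType d)
  (Q : {measure set T -> \bar R}) (beta : R) (l : T -> R) :
  measurable_fun setT l -> 0 < gibbs_Z Q beta l < +oo ->
  [/\ (0 < fine (gibbs_Z Q beta l))%R, gibbs_Z Q beta l = (fine (gibbs_Z Q beta l))%:E,
   measurable_fun setT (gibbs_density Q beta l),
   (forall x, 0 <= gibbs_density Q beta l x)%R &
   Q.-integrable setT (fun x => (gibbs_density Q beta l x)%:E) /\
   \int[Q]_x (gibbs_density Q beta l x)%:E = 1].
Proof.
move=> ml /andP[Z0 Zoo].
have fZ : gibbs_Z Q beta l \is a fin_num by rewrite ge0_fin_numE ?ltW.
have hZ : gibbs_Z Q beta l = (fine (gibbs_Z Q beta l))%:E by rewrite fineK.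
have Zp : (0 < fine (gibbs_Z Q beta l))%R by rewrite -lte_fin -hZ.
have mE := @gibbs_meas _ _ _ Q beta l ml.
have mp : measurable_fun setT (gibbs_density Q beta l).
  exact: (measurable_realfun.measurable_funM mE (measurable_cst _)).
have p0 : (forall x, 0 <= gibbs_density Q beta l x)%R.
  by move=> x; rewrite /gibbs_density divr_ge0 ?expR_ge0 ?ltW.
have int1 : \int[Q]_x (gibbs_density Q beta l x)%:E = 1.
  rewrite (eq_integral (fun x => (fine (gibbs_Z Q beta l))^-1%:E * (expR (- beta * l x))%:E)); last first.
    by move=> x _; rewrite -EFinM mulrC.
  have h1 : measurable_fun setT (EFin \o (fun x => expR (- beta * l x))).
    exact/measurable_realfun.measurable_EFinP.
  have h2 : forall x, setT x -> 0 <= (expR (- beta * l x))%:E.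
    by move=> x _; rewrite lee_fin expR_ge0.
  have h3 : 0 <= (fine (gibbs_Z Q beta l))^-1%:E by rewrite lee_fin invr_ge0 ltW.
  rewrite ge0_integralZl//.
  by rewrite -/(gibbs_Z Q beta l) hZ -EFinM mulVf// gt_eqF.
constructor => //; split => //.
apply/integrableP; split; first exact/measurable_realfun.measurable_EFinP.
rewrite (eq_integral (fun x => (gibbs_density Q beta l x)%:E)); first by rewrite int1 ltry.
by move=> x _; rewrite gee0_abs// lee_fin.
Qed.

Lemma Z_le (R : realType) (d : measure_display) (T : measurableType d)
  (Q : {measure set T -> \bar R}) (beta eps : R) (l lt : T -> R) :
  (0 < beta)%R ->
  measurable_fun setT l -> measurable_fun setT lt ->
  (forall x, `|l x - lt x| <= eps)%R ->
  gibbs_Z Q beta lt <= (expR (beta * eps))%:E * gibbs_Z Q beta l.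
Proof.
move=> b0 ml mlt hle.
have m1 : measurable_fun setT (EFin \o (fun x => expR (- beta * l x))).
  exact/measurable_EFinP/(@gibbs_meas _ _ _ Q).
have m2 : measurable_fun setT (EFin \o (fun x => expR (- beta * lt x))).
  exact/measurable_EFinP/(@gibbs_meas _ _ _ Q).
have h2 : forall x, setT x -> 0 <= (expR (- beta * l x))%:E.
  by move=> x _; rewrite lee_fin expR_ge0.
have h3 : 0 <= (expR (beta * eps))%:E by rewrite lee_fin expR_ge0.
rewrite /gibbs_Z -ge0_integralZl//.
have h4 : forall x, setT x -> 0 <= (expR (- beta * lt x))%:E.
  by move=> x _; rewrite lee_fin expR_ge0.
have m3 : measurable_fun setT (fun x => (expR (beta * eps))%:E * (expR (- beta * l x))%:E).
  exact: measurable_funeM.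
apply: ge0_le_integral => //.
move=> x _; rewrite -EFinM lee_fin -expRD ler_expR.
have := hle x; rewrite ler_norml => /andP[h6 h5].
nra.
Qed.

Theorem lemma17 (R : realType) (d : measure_display) (T : measurableType d)
  (Q : {measure set T -> \bar R}) (beta eps : R) (l lt : T -> R) :
  (0 < beta)%R ->
  measurable_fun setT l -> measurable_fun setT lt ->
  0 < gibbs_Z Q beta l < +oo ->
  0 < gibbs_Z Q beta lt < +oo ->
  (forall x, `|l x - lt x| <= eps)%R ->
  KL_dens Q (gibbs_density Q beta l) (gibbs_density Q beta lt)
    <= (2 * beta * eps * Num.min 1 (expR (2 * beta * eps) - 1))%:E.
Proof.
move=> b0 ml mlt hZl hZt hle.
have e0 : (0 <= eps)%R.
  case: (pselect (exists x : T, True)) => [[x _]|nx].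
    exact: le_trans (normr_ge0 _) (hle x).
  exfalso.
  have : gibbs_Z Q beta l = 0.
    rewrite /gibbs_Z (_ : [set: T] = set0)%classic ?integral_set0 //.
    by apply/seteqP; split => x //= _; apply: nx; exists x.
  by move=> h; move: hZl; rewrite h ltxx.
have b1 := @Z_le _ _ _ Q beta eps l lt b0 ml mlt hle.
have b2 := @Z_le _ _ _ Q beta eps lt l b0 mlt ml (fun x => ltac:(rewrite distrC; exact: hle x)).
have [Zp hZ mp p0 [ip ip1]] := @gibbs_facts _ _ _ Q beta l ml hZl.
have [Zq hZq mq q0 [iq iq1]] := @gibbs_facts _ _ _ Q beta lt mlt hZt.
move: b1 b2; rewrite hZ hZq -!EFinM !lee_fin => b1 b2.
rewrite /KL_dens.
move: mp p0 ip ip1 mq q0 iq iq1.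
have hp1 : forall x, (gibbs_density Q beta l x = expR (- beta * l x) / fine (gibbs_Z Q beta l))%R by [].
have hq1 : forall x, (gibbs_density Q beta lt x = expR (- beta * lt x) / fine (gibbs_Z Q beta lt))%R by [].
move: hp1 hq1.
set p := gibbs_density Q beta l.
set q := gibbs_density Q beta lt.
move: Zp Zq b1 b2.
set Z := fine (gibbs_Z Q beta l).
set Zt := fine (gibbs_Z Q beta lt).
move=> Zp Zq b1 b2 hp1 hq1 mp p0 ip ip1 mq q0 iq iq1.
set c := ln (Zt / Z).
have ec : (expR c = Zt / Z)%R by rewrite lnK // posrE divr_gt0.
have Ep := expR_gt0 (beta * eps).
have c1 : (c <= beta * eps)%R.
  by rewrite -ler_expR ec ler_pdivrMr.
have c2 : (- (beta * eps) <= c)%R.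
  rewrite -ler_expR ec expRN ler_pdivlMr // mulrC ler_pdivrMr //.
  by rewrite mulrC.
set a := (2 * beta * eps)%R.
have a0 : (0 <= a)%R by rewrite /a mulr_ge0 // mulr_ge0 // ltW.
pose t x := (beta * (lt x - l x) + c)%R.
have ht : forall x, (`|t x| <= a)%R.
  move=> x; have := hle x; rewrite !ler_norml => /andP[h4 h5].
  rewrite /t /a; apply/andP; split; nra.
have hp : forall x, p x = (q x * expR (t x))%R.
  move=> x; rewrite hp1 hq1 /t expRD ec.
  have -> : expR (- beta * l x) = (expR (- beta * lt x) * expR (beta * (lt x - l x)))%R.
    by rewrite -expRD; congr expR; ring.
  field; apply/andP; split; exact: lt0r_neq0.
have qp : forall x, (0 < q x)%R by move=> x; rewrite hq1 divr_gt0 // expR_gt0.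
have hln : forall x, (ln (p x / q x) = t x)%R.
  by move=> x; rewrite hp mulrAC divff ?mul1r ?expRK // lt0r_neq0.
rewrite (eq_integral (fun x => (p x * t x)%:E)); last by move=> x _; rewrite hln.
have mt : measurable_fun setT t.
  apply: measurable_funD; last exact: measurable_cst.
  apply: measurable_funM; first exact: measurable_cst.
  exact: measurable_funB.
have mpt : measurable_fun setT (EFin \o (fun x => p x * t x)%R).
  by apply/measurable_EFinP; exact: measurable_funM.
have iap := integrableZl measurableT a ip.
have ipt : Q.-integrable setT (fun x => (p x * t x)%:E).
  apply: (le_integrable measurableT mpt _ iap) => x _.
  rewrite -EFinM !abse_EFin lee_fin (normrM (p x)) (normrM a).
  by rewrite (ger0_norm (p0 x)) (ger0_norm a0) mulrC ler_wpM2r.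
have B1 : \int[Q]_x (p x * t x)%:E <= a%:E.
  rewrite -[leRHS]mule1 -ip1 -integralZl //.
  apply: le_integral => // x _.
  rewrite -EFinM lee_fin mulrC ler_wpM2r //.
  exact: le_trans (ler_norm _) (ht x).
set K := (a * (expR a - 1))%R.
have iG := integrableD measurableT (integrableZl measurableT K iq) (integrableB measurableT ip iq).
have B2 : \int[Q]_x (p x * t x)%:E <= K%:E.
  apply: le_trans (le_integral measurableT ipt iG _) _.
    move=> x _ /=; rewrite -EFinM -EFinB -EFinD lee_fin hp.
    have key := @key_ineq _ a (t x) a0 (ht x).
    have := ler_wpM2l (ltW (qp x)) key.
    by rewrite /K => h; lra.
  have iKq := integrableZl measurableT K iq.
  have ipq := integrableB measurableT ip iq.
  rewrite integralD //.
  rewrite integralB // integralZl // ip1 iq1 mule1 subee // adde0.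
  done.
have [h|h] := leP (1%R : R) (expR a - 1)%R.
  by rewrite mulr1.
exact: B2.
Qed.
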